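(* Under the standing setup below, as $n \to +\infty$, \[ a_{-n} u_n + a_{-n+1} u_{n+1} = \frac{\pi}{4} + O\!\left( \frac{1}{D_{n-1}^2} \right). \] In particular, $\lim_{n \to +\infty} \left( a_{-n} u_n + a_{-n+1} u_{n+1} \right) = \dfrac{\pi}{4}$.
   Context: Standing setup: $a_0, a_1 \in \mathbb{Z}$ and $u_0 > u_1 > 0$ are rational numbers with $a_0 \arctan u_0 + a_1 \arctan u_1 = \pi/4$. Let $\alpha := \arctan u_0 / \arctan u_1$ (which is $>1$ and irrational), with infinite simple continued fraction expansion $\alpha = [q_0; q_1, q_2, \dots]$, $q_i \in \mathbb{N}$. The numbers $u_n$ ($n \in \mathbb{N}_0$) are the positive reals with the given $u_0,u_1$ and $\arctan u_n = q_n \arctan u_{n+1} + \arctan u_{n+2}$ for all $n \in \mathbb{N}_0$. The integers $a_{-n}$ for $n \geq 1$ are defined recursively by $a_{-n-1} := q_n a_{-n} + a_{-n+1}$ for all $n \in \mathbb{N}_0$. The sequences $N_k, D_k$ ($k \ge -2$) are defined by $N_{-2}=0$, $N_{-1}=1$, $D_{-2}=1$, $D_{-1}=0$, and $N_k = q_k N_{k-1} + N_{k-2}$, $D_k = q_k D_{k-1} + D_{k-2}$ for $k \in \mathbb{N}_0$; thus $N_n/D_n = [q_0; q_1, \dots, q_n]$ in lowest terms for $n \ge 0$. *)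

(* Defs.v *)
From Stdlib Require Import Reals ZArith.
Open Scope R_scope.

Definition is_rational (x : R) : Prop :=
  exists p q : Z, (q <> 0)%Z /\ x = IZR p / IZR q.

(** Complete quotients of the simple continued fraction algorithm:
    x_0 = x, x_{k+1} = 1 / (x_k - floor x_k).  (Int_part = floor.) *)
Fixpoint cf_rem (x : R) (k : nat) : R :=
  match k with
  | O => x
  | S k => / (cf_rem x k - IZR (Int_part (cf_rem x k)))
  end.

(** Partial quotients: x = [q_0; q_1, q_2, ...] with q_k = floor x_k. *)
Definition cf_digit (x : R) (k : nat) : Z := Int_part (cf_rem x k).

(** cf_den_aux q k = (D_k, D_{k-1}) where D_{-2}=1, D_{-1}=0,
    D_k = q_k D_{k-1} + D_{k-2}. *)
Fixpoint cf_den_aux (q : nat -> Z) (k : nat) : Z * Z :=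
  match k with
  | O => (1%Z, 0%Z)
  | S k => let (d, d') := cf_den_aux q k in (q (S k) * d + d', d)%Z
  end.

Definition cf_den (q : nat -> Z) (k : nat) : Z := fst (cf_den_aux q k).

(* Main.v *)
Require Import Defs.
From Stdlib Require Import Reals ZArith Lra Lia Psatz.
Open Scope R_scope.

Lemma atan_bnds x : 0 < x -> 0 <= x - atan x <= x ^ 3 /\ x <= (1 + x ^ 2) * atan x.
Proof.
  intros Hx.
  destruct (MVT_cor2 atan (fun c => / (1 + c ^ 2)) 0 x Hx) as [c [Hc Hc2]].
  { intros c _; apply derivable_pt_lim_atan. }
  rewrite atan_0 in Hc.
  set (t := / (1 + c ^ 2)) in *.
  assert (Ht : t * (1 + c ^ 2) = 1) by (unfold t; field; nra).
  assert (Ht0 : 0 < t) by (unfold t; apply Rinv_0_lt_compat; nra).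
  assert (atan x = x * t) by lra.
  rewrite H.
  assert (Hc3 : c ^ 2 <= x ^ 2) by nra.
  split; [split|].
  - nra.
  - assert (H1t : 1 - t = c ^ 2 * t) by lra.
    replace (x - x * t) with (x * (1 - t)) by ring. rewrite H1t. assert (c ^ 2 * t <= c ^ 2) by nra. assert (x * (c ^ 2 * t) <= x * c^2) by (apply Rmult_le_compat_l; lra). nra.
  - assert (H2t : 1 <= (1 + x ^ 2) * t) by nra.
    replace ((1 + x ^ 2) * (x * t)) with (x * ((1 + x ^ 2) * t)) by ring.
    assert (x * 1 <= x * ((1 + x ^ 2) * t)) by (apply Rmult_le_compat_l; lra). lra.
Qed.

Lemma final_ineq (a b e x y U V M K t1 : R) :
  1 <= e -> 0 <= K -> Rabs a <= K * e -> Rabs b <= K * e -> 0 < y <= x ->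
  0 <= U - x <= U ^ 3 -> 0 <= V - y <= V ^ 3 -> 0 < U <= M * x -> 0 < V <= M * y ->
  e * x <= t1 ->
  Rabs (a * U + b * V - (a * x + b * y)) <= 2 * K * M ^ 3 * t1 ^ 3 / e ^ 2.
Proof.
  intros He HK Ha Hb Hxy HU HV HUM HVM Ht.
  replace (a * U + b * V - (a * x + b * y)) with (a * (U - x) + b * (V - y)) by ring.
  eapply Rle_trans; [apply Rabs_triang|].
  rewrite !Rabs_mult, (Rabs_right (U - x)), (Rabs_right (V - y)) by lra.
  assert (HU3 : U ^ 3 <= (M * x) ^ 3) by (apply pow_incr; lra).
  assert (HV3 : V ^ 3 <= (M * x) ^ 3).
  { apply pow_incr; split; [lra|]. assert (0 <= M) by nra. nra. }
  assert (HE3 : (e * x) ^ 3 <= t1 ^ 3) by (apply pow_incr; nra).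
  assert (H1 : Rabs a * (U - x) <= K * e * (M * x) ^ 3).
  { apply Rmult_le_compat; try apply Rabs_pos; lra. }
  assert (H2 : Rabs b * (V - y) <= K * e * (M * x) ^ 3).
  { apply Rmult_le_compat; try apply Rabs_pos; lra. }
  apply Rle_trans with (2 * K * M ^ 3 * (e * x) ^ 3 / e ^ 2).
  - replace (2 * K * M ^ 3 * (e * x) ^ 3 / e ^ 2) with (2 * (K * e * (M * x) ^ 3))
      by (field; lra). lra.
  - unfold Rdiv. apply Rmult_le_compat_r.
    + apply Rlt_le, Rinv_0_lt_compat. nra.
    + assert (0 <= M ^ 3).
      { apply pow_le. assert (0 < M * x) by lra. nra. }
      assert (0 <= 2 * K * M ^ 3) by nra.
      apply Rmult_le_compat_l; lra.
Qed.

Fixpoint Eseq (q : nat -> Z) (k : nat) : Z :=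
  match k with
  | O => 1%Z
  | S O => 0%Z
  | S ((S j) as k') => (q j * Eseq q k' + Eseq q j)%Z
  end.

Lemma Erec q k : Eseq q (S (S k)) = (q k * Eseq q (S k) + Eseq q k)%Z.
Proof. destruct k; reflexivity. Qed.

Lemma cf_den_E q m : cf_den_aux q m = (Eseq q (S (S m)), Eseq q (S m)).
Proof.
  induction m.
  - simpl. f_equal. lia.
  - cbn [cf_den_aux]. rewrite IHm. rewrite (Erec q (S m)). reflexivity.
Qed.

Section S.
Variable q : nat -> Z.
Hypothesis Hq : forall n, (1 <= q n)%Z.

Lemma E_nn k : (0 <= Eseq q k /\ 0 <= Eseq q (S k))%Z.
Proof.
  induction k.
  - simpl; lia.
  - split; [tauto|]. rewrite Erec. specialize (Hq k). nia.
Qed.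

Lemma E_mono k : (Eseq q (S k) <= Eseq q (S (S k)))%Z.
Proof. rewrite Erec. pose proof (E_nn k). specialize (Hq k). nia. Qed.

Lemma E_pos k : (1 <= Eseq q (S (S k)))%Z.
Proof.
  induction k.
  - rewrite Erec. simpl. lia.
  - pose proof (E_mono (S k)). lia.
Qed.

Lemma E_grow k : (Z.of_nat k + 1 <= 2 * Eseq q (S (S k)))%Z.
Proof.
  assert (H : forall k, (Z.of_nat k + 1 <= 2 * Eseq q (S (S k)))%Z /\
                        (Z.of_nat (S k) + 1 <= 2 * Eseq q (S (S (S k))))%Z).
  { induction k0.
    - split.
      + pose proof (E_pos 0). simpl Z.of_nat. lia.
      + pose proof (E_pos 1). simpl Z.of_nat. lia.
    - destruct IHk0 as [H1 H2]. split; [exact H2|].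
      rewrite (Erec q (S (S k0))).
      pose proof (E_pos (S k0)). pose proof (E_nn (S (S k0))).
      specialize (Hq (S (S k0))).
      rewrite !Nat2Z.inj_succ in *. nia. }
  apply H.
Qed.
End S.

Theorem corollary3 (a0 a1 : Z) (u0 u1 : R) (u : nat -> R) (A : nat -> Z) :
  is_rational u0 -> is_rational u1 -> 0 < u1 -> u1 < u0 ->
  IZR a0 * atan u0 + IZR a1 * atan u1 = PI / 4 ->
  ~ is_rational (atan u0 / atan u1) ->
  u 0%nat = u0 -> u 1%nat = u1 -> (forall n, 0 < u n) ->
  (forall n, atan (u n) =
     IZR (cf_digit (atan u0 / atan u1) n) * atan (u (S n)) + atan (u (S (S n)))) ->
  A 0%nat = a1 -> A 1%nat = a0 ->
  (forall n, A (S (S n)) = (cf_digit (atan u0 / atan u1) n * A (S n) + A n)%Z) ->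
  (exists C : R, exists N : nat, (1 <= N)%nat /\
     forall n : nat, (N <= n)%nat ->
       Rabs (IZR (A (S n)) * u n + IZR (A n) * u (S n) - PI / 4)
         <= C / (IZR (cf_den (cf_digit (atan u0 / atan u1)) (n - 1))) ^ 2)
  /\ Un_cv (fun n => IZR (A (S n)) * u n + IZR (A n) * u (S n)) (PI / 4).
Proof.
  intros _ _ Hu1p Hu10 Hpi _ Hu0 Hu1 Hupos Hrec HA0 HA1 HA.
  set (al := atan u0 / atan u1) in *.
  set (q := cf_digit al) in *.
  set (th := fun n => atan (u n)).
  assert (Hth : forall n, 0 < th n).
  { intro n. unfold th. rewrite <- atan_0. apply atan_increasing, Hupos. }
  assert (Hrec' : forall n, th n = IZR (q n) * th (S n) + th (S (S n))) by exact Hrec.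
  assert (Hqdef : forall n, q n = Int_part (cf_rem al n)) by reflexivity.
  assert (Hal : forall n, cf_rem al n = th n / th (S n)).
  { induction n.
    - simpl. unfold al, th. rewrite Hu0, Hu1. reflexivity.
    - cbn [cf_rem]. rewrite IHn.
      pose proof (Hrec' n) as Hr. rewrite Hqdef, IHn in Hr.
      set (z := IZR (Int_part (th n / th (S n)))) in *.
      pose proof (Hth n). pose proof (Hth (S n)). pose proof (Hth (S (S n))).
      replace (th n / th (S n) - z) with (th (S (S n)) / th (S n)).
      + field. lra.
      + rewrite Hr. field. lra. }
  assert (Hdec : forall n, th (S n) < th n).
  { intro n. destruct n as [|m].
    - unfold th. rewrite Hu0, Hu1. apply atan_increasing. lra.
    - pose proof (base_Int_part (cf_rem al m)) as [_ Hb].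
      rewrite <- Hqdef, Hal in Hb.
      pose proof (Hth m). pose proof (Hth (S m)).
      assert (IZR (q m) * th (S m) > th m - th (S m)).
      { assert (Hb2 : th m / th (S m) < IZR (q m) + 1) by lra.
        apply Rmult_lt_compat_r with (r := th (S m)) in Hb2; [|lra].
        replace (th m / th (S m) * th (S m)) with (th m) in Hb2 by (field; lra). lra. }
      pose proof (Hrec' m). lra. }
  assert (Hq1 : forall n, (1 <= q n)%Z).
  { intro n. pose proof (base_Int_part (cf_rem al n)) as [_ Hb].
    rewrite <- Hqdef, Hal in Hb.
    pose proof (Hdec n). pose proof (Hth (S n)).
    assert (1 < th n / th (S n)).
    { apply Rmult_lt_reg_r with (th (S n)); [lra|]. field_simplify; lra. }
    assert (Hq0 : 0 < IZR (q n)) by lra. apply lt_IZR in Hq0. lia. }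
  set (E := Eseq q).
  set (K := (Z.abs (A 2%nat) + Z.abs a0)%Z).
  assert (HAb : forall k, (Z.abs (A (S (S k))) <= K * E (S (S k)))%Z /\
                          (Z.abs (A (S (S (S k)))) <= K * E (S (S (S k))))%Z).
  { induction k.
    - unfold E. rewrite (Erec q 1), (Erec q 0). simpl Eseq. split.
      + unfold K. lia.
      + rewrite (HA 1%nat), HA1. fold q. unfold K.
        pose proof (Hq1 1%nat).
        pose proof (Z.abs_triangle (q 1%nat * A 2%nat) a0).
        rewrite Z.abs_mul, (Z.abs_eq (q 1%nat)) in H0 by lia. nia.
    - destruct IHk as [H1 H2]. split; [exact H2|].
      unfold E in *. rewrite (Erec q (S (S k))), (HA (S (S k))). fold q.
      pose proof (Hq1 (S (S k))).
      pose proof (Z.abs_triangle (q (S (S k)) * A (S (S (S k)))) (A (S (S k)))).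
      rewrite Z.abs_mul, (Z.abs_eq (q (S (S k)))) in H0 by lia. nia. }
  assert (HK : (0 <= K)%Z) by (unfold K; lia).
  assert (Inv1 : forall n, IZR (A (S n)) * th n + IZR (A n) * th (S n) = PI / 4).
  { induction n.
    - rewrite HA1, HA0. unfold th. rewrite Hu0, Hu1. exact Hpi.
    - rewrite HA, plus_IZR, mult_IZR. fold q. rewrite <- IHn, (Hrec' n). ring. }
  assert (Inv2 : forall n, IZR (E (S n)) * th n + IZR (E n) * th (S n) = th 1%nat).
  { induction n.
    - change (E 1%nat) with 0%Z; change (E 0%nat) with 1%Z. ring.
    - unfold E in *. rewrite Erec, plus_IZR, mult_IZR. rewrite <- IHn, (Hrec' n). ring. }
  assert (Hle1 : forall m, th (S m) <= th 1%nat).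
  { induction m. lra. pose proof (Hdec (S m)). lra. }
  assert (Hule : forall m, u (S m) <= u1).
  { intro m. destruct (Rle_or_lt (u (S m)) u1) as [h|h]; [exact h|].
    apply atan_increasing in h. rewrite <- Hu1 in h. specialize (Hle1 m). unfold th in Hle1. lra. }
  set (M := 1 + u1 ^ 2).
  assert (HUb : forall m, 0 <= u (S m) - th (S m) <= u (S m) ^ 3 /\
                          0 < u (S m) <= M * th (S m)).
  { intro m. destruct (atan_bnds (u (S m)) (Hupos _)) as [h1 h2].
    split; [exact h1|]. split; [apply Hupos|].
    eapply Rle_trans; [exact h2|]. unfold M. apply Rmult_le_compat_r.
    - apply Rlt_le, Hth.
    - pose proof (Hupos (S m)). pose proof (Hule m). nra. }
  set (C := 2 * IZR K * M ^ 3 * th 1%nat ^ 3).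
  assert (Hmain : forall j, Rabs (IZR (A (S (S (S j)))) * u (S (S j)) + IZR (A (S (S j))) * u (S (S (S j))) - PI / 4)
      <= C / IZR (E (S (S (S j)))) ^ 2).
  { intro j.
    destruct (HAb j) as [Hb Ha].
    pose proof (E_mono q Hq1 (S j)) as Hm. fold E in Hm.
    pose proof (E_pos q Hq1 (S j)) as He. fold E in He.
    pose proof (E_nn q Hq1 (S (S j))) as [Hn1 Hn2]. fold E in Hn1, Hn2.
    rewrite <- (Inv1 (S (S j))).
    unfold C. apply final_ineq.
    - apply IZR_le in He. exact He.
    - apply IZR_le in HK. exact HK.
    - rewrite <- abs_IZR, <- mult_IZR. apply IZR_le. exact Ha.
    - rewrite <- abs_IZR, <- mult_IZR. apply IZR_le. apply Z.le_trans with (K * E (S (S j)))%Z; [exact Hb| apply Z.mul_le_mono_nonneg_l; [exact HK| exact Hm]].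
    - split; [apply Hth| apply Rlt_le, Hdec].
    - apply HUb.
    - apply HUb.
    - apply HUb.
    - apply HUb.
    - pose proof (Inv2 (S (S j))). pose proof (Hth (S (S (S j)))).
      apply IZR_le in Hn1. nra. }
  assert (HC : 0 <= C).
  { unfold C. apply IZR_le in HK. assert (0 <= M) by (unfold M; nra).
    pose proof (Hth 1%nat).
    apply Rmult_le_pos; [apply Rmult_le_pos; [lra| apply pow_le; lra]| apply pow_le; lra]. }
  split.
  - exists C, 2%nat. split; [lia|].
    intros n Hn. destruct n as [|[|j]]; try lia.
    unfold cf_den. replace (S (S j) - 1)%nat with (S j) by lia.
    rewrite cf_den_E. simpl fst. apply Hmain.
  - intros eps Heps.
    set (r := 2 * C / eps).
    exists (Z.abs_nat (up r) + 2)%nat.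
    intros n Hn. unfold R_dist.
    destruct n as [|[|j]]; try lia.
    eapply Rle_lt_trans; [apply Hmain|].
    pose proof (E_grow q Hq1 (S j)) as Hg. fold E in Hg.
    pose proof (E_pos q Hq1 (S j)) as He. fold E in He.
    apply IZR_le in Hg, He. rewrite plus_IZR, mult_IZR, <- INR_IZR_INZ in Hg.
    set (e := IZR (E (S (S (S j))))) in *.
    assert (Hr : r < INR (S (S j))).
    { destruct (archimed r) as [Hu _].
      assert (IZR (up r) <= INR (Z.abs_nat (up r))).
      { rewrite INR_IZR_INZ, Zabs2Nat.id_abs. apply IZR_le. lia. }
      assert (INR (Z.abs_nat (up r)) <= INR (S (S j))) by (apply le_INR; lia).
      lra. }
    rewrite S_INR in Hr.
    assert (Hre : 2 * C < eps * (2 * e)).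
    { unfold r in Hr. apply Rmult_lt_compat_l with (r := eps) in Hr; [|lra].
      replace (eps * (2 * C / eps)) with (2 * C) in Hr by (field; lra). assert (eps * (INR (S j) + 1) <= eps * (2 * e)) by (apply Rmult_le_compat_l; lra). lra. }
    apply Rle_lt_trans with (C / e).
    + unfold Rdiv. apply Rmult_le_compat_l; [lra|].
      apply Rinv_le_contravar; [lra|]. nra.
    + apply Rmult_lt_reg_r with e; [lra|]. field_simplify; lra.
Qed.
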